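(* Let $p$ be a prime, $A\cong C_p\times C_p$, $G$ an abelian group acting on $A$ and $H\le G$. If $f\in\mathcal{E}(G,H,A)$ and $a\in A$ satisfies $f(a)<0$, then $\mathrm{C}_G(a)=\mathrm{C}_G(A)$.
   Context: $\mathrm{C}_G(S)$ denotes the pointwise stabilizer of $S\subseteq A$ in $G$. Definition of $\mathcal{E}(G,H,A)$ (for a group $G$ acting on a finite abelian group $A$ and $H\le G$): the set of functions $f:A\to\mathbb{Z}$ constant on $H$-orbits such that (I) $\sum_{X\in\mathrm{Cl}_H(A)}f(X)=1$, where $\mathrm{Cl}_H(A)$ is the set of $H$-orbits; (II) $f$ vanishes outside a single local $G$-class of $A$ ($a,b$ locally $G$-conjugate iff $a_r,b_r$ are $G$-conjugate for every prime $r$, $a_r$ the $r$-part); (III) $\sum_{c\in C}|\mathrm{C}_H(c)|f(c)\ge0$ for every coset $C$ of a minimal cocyclic subgroup of $A$ (a subgroup $L$ with $A/L$ cyclic, minimal with this property); (IV) $f(a)\ge -h_A[\mathrm{C}_H(a_{\pi_0}):\mathrm{C}_H(a)]$ for all $a$, where $\pi_0$ is the set of primes $r$ dividing $|A|$ with $A_r$ cyclic and $h_A=\frac{\sum_{X\in\pi^-}\prod_{r\in\pi}(r^{k_r-\Delta_X(r)}-1)}{\prod_{r\in\pi}(r-1)r^{k_r-1}}$ with $\pi$ the primes dividing $|A|$, $\pi^-$ the odd-cardinality subsets of $\pi$, $\Delta_X$ the characteristic function of $X$, $k_r$ the rank of the socle of $A_r$; (V) $f(a)<0$ for some $a$. 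*)

(* Defs.v *)
From HB Require Import structures.
From mathcomp Require Import all_boot all_order all_algebra all_fingroup all_solvable.
Set Implicit Arguments. Unset Strict Implicit. Unset Printing Implicit Defensive.
Import GRing.Theory Num.Theory.

Local Open Scope group_scope.

Section E.
Variables (gT aT : finGroupType) (G H : {group gT}) (A : {group aT}).
Variable to : groupAction G A.

Definition piA : seq nat := primes #|A|.

Definition pi0 : nat_pred := [pred r | (r \in primes #|A|) && cyclic 'O_r(A)].

(* k_r : rank of the socle of A_r (= r-rank of the abelian group A) *)
Definition kA (r : nat) : nat := 'r_r(A).

Definition hA : rat :=
  ((\sum_(X : {set 'I_(size piA)} | odd #|X|)
       \prod_(i < size piA)
          ((nth 0%N piA i)%:R ^+ (kA (nth 0%N piA i) - (i \in X)) - 1))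
   / \prod_(i < size piA)
       (((nth 0%N piA i)%:R - 1) * (nth 0%N piA i)%:R ^+ (kA (nth 0%N piA i)).-1))%R.

Definition loc_conj (a b : aT) : Prop :=
  forall r : nat, prime r -> exists2 g, g \in G & to (a.`_r) g = b.`_r.

Definition min_cocyclic (L : {group aT}) : Prop :=
  [min L of K | (K \subset A) && cyclic (A / K)].

Definition in_E (f : aT -> int) : Prop :=
  (forall a h, a \in A -> h \in H -> f (to a h) = f a) /\
  (\sum_(X in orbit to H @: A) f (repr X) = 1)%R /\
  (exists2 b, b \in A & forall a, a \in A -> f a <> 0%R -> loc_conj a b) /\
  (forall (L : {group aT}) x, min_cocyclic L -> x \in A ->
     (0 <= \sum_(c in L :* x) (#|'C_H[c | to]|%:Z * f c))%R) /\
  (forall a, a \in A ->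
     ((f a)%:~R >= - hA * (#|'C_H[a.`_pi0 | to] : 'C_H[a | to]|)%:R :> rat)%R) /\
  (exists2 a, a \in A & (f a < 0)%R).

End E.

(* Main.v *)
Require Import Defs.
From HB Require Import structures.
From mathcomp Require Import all_boot all_order all_algebra all_fingroup all_solvable.
Import GRing.Theory Num.Theory.

Lemma hAE (aT : finGroupType) (A : {group aT}) p : prime p -> (p.-abelem A)%g -> #|A| = (p ^ 2)%N ->
  hA A = (p%:R^-1)%R.
Proof.
move=> pp abA cardA.
have kE : kA A p = 2%N by rewrite /kA p_rank_abelem // cardA pfactorK.
rewrite /hA /piA cardA primesX // primes_prime //.
have oddE : forall X : {set 'I_1}, odd #|X| = (X == setT).
  move=> X; apply/idP/eqP => [o|->]; last by rewrite cardsT card_ord.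
  apply/eqP; rewrite eqEcard subsetT cardsT card_ord.
  by move: (max_card X) o; rewrite card_ord; case: #|X| => [|[]].
rewrite (eq_bigl (pred1 setT)) ?big_pred1_eq; last by move=> X; rewrite /= oddE.
rewrite !big_ord1 /= kE inE /= expr1.
have p1 : (1 < p)%N by exact: prime_gt1.
have : (p%:R - 1 : rat) != 0%R.
  by rewrite subr_eq0 pnatr_eq1 -(subnK p1) addn2.
move=> h; have hp: (p%:R : rat) != 0%R by rewrite pnatr_eq0 -lt0n prime_gt0.
by rewrite invfM mulrA mulfV // mul1r.
Qed.


Lemma pi0a (aT : finGroupType) (A : {group aT}) p a : prime p -> (p.-abelem A)%g -> #|A| = (p ^ 2)%N ->
  a \in A -> (a.`_(pi0 A) = 1)%g.
Proof.
move=> pp abA cardA Aa; apply/constt1P.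
rewrite /p_elt /pnat order_gt0 /=; apply/allP => r; rewrite mem_primes => /and3P[pr _ dv].
have : r \in primes #|A|.
  by rewrite mem_primes pr cardA expn_gt0 prime_gt0 //= -cardA (dvdn_trans dv (order_dvdG Aa)).
rewrite cardA primesX // primes_prime // inE => /eqP ->.
rewrite !inE /= negb_and; apply/orP; right.
by rewrite pcore_pgroup_id ?(abelem_pgroup abA) // (abelem_cyclic abA) cardA pfactorK.
Qed.

Lemma astab1_in (aT : finGroupType) (D : {set aT}) (rT : finType) (to : action D rT) x g :
  (g \in 'C[x | to]%g) = (g \in D) && (to x g == x).
Proof. by rewrite !inE sub1set inE. Qed.

Theorem lemma5p1 (gT aT : finGroupType) (p : nat) (G H : {group gT})
  (A : {group aT}) (to : groupAction G A) (f : aT -> int) (a : aT) :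
  prime p -> (p.-abelem A)%g -> #|A| = (p ^ 2)%N ->
  abelian G -> H \subset G ->
  in_E H to f -> a \in A -> (f a < 0)%R ->
  ('C_G[a | to] = 'C_G(A | to))%g.
Proof.
move=> pp abA cardA abG sHG [_ [_ [_ [_ [IV _]]]]] Aa fa.
have p1 : (1 < p)%N by exact: prime_gt1.
have := IV a Aa; rewrite (@hAE _ _ _ pp abA cardA) (@pi0a _ _ _ _ pp abA cardA Aa).
have -> : ('C_H[1 | to] = H)%g.
  apply/setIidPl; apply/subsetP => h Hh; rewrite astab1_in.
  have Gh := subsetP sHG h Hh; by rewrite Gh /= gact1 ?eqxx.
rewrite -card_orbit_in //.
set n := #|orbit to H a| => hIV.
have pn : (p <= n)%N.
  have fa1 : ((f a)%:~R <= - 1 :> rat)%R.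
    have h : (f a <= -1)%R by rewrite -ltzD1 addNr.
    by move: h; rewrite -(ler_int rat) rmorphN rmorph1.
  have : (1 <= n%:R / p%:R :> rat)%R.
    rewrite -lerN2 mulrC; apply: Order.le_trans fa1; apply: Order.le_trans hIV.
    by rewrite mulNr; apply: Order.le_refl.
  by rewrite ler_pdivlMr ?ltr0n ?prime_gt0 // mul1r ler_nat.
set C := 'C_G[a | to]%g.
set F := 'C_(|to)(C)%g.
have sFA : (F \subset A)%g by rewrite /F gacentE ?subsetIl.
have inF : forall x, x \in A -> (forall g, g \in G -> g \in C -> to x g = x) -> x \in F.
  move=> x Ax hx; rewrite /F gacentE ?subsetIl //; apply/setIP; split=> //; apply/afixP => g /setIP[Gg Cg]; by apply: hx => //; apply/setIP.
have orbFs : (orbit to H a \subset F)%g.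
  apply/subsetP => y /orbitP [h Hh <-].
  have Gh := subsetP sHG h Hh.
  apply: inF; first by rewrite gact_stable.
  move=> g Gg /setIP[_]; rewrite astab1_in => /andP[_ /eqP ag].
  by rewrite -actMin // -(centsP abG g Gg h Gh) actMin // ag.
have oF : (n < #|F|)%N.
  apply: proper_card; rewrite properE orbFs /=; apply/subsetPn; exists 1%g; first exact: group1.
  apply/orbitP => -[h Hh ha1].
  have Gh := subsetP sHG h Hh.
  have a1 : a = 1%g by apply: (act_inj to h); rewrite /= ha1 gact1.
  move: pn; rewrite /n a1; have -> : orbit to H 1%g = [set 1%g].
    apply/setP => y; rewrite inE; apply/orbitP/eqP => [[k Hk <-]|->]; last by exists 1%g; rewrite ?group1 ?act1.
    by rewrite gact1 // (subsetP sHG).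
  by rewrite cards1 leqNgt p1.
have FA : F = A.
  apply/eqP; rewrite eqEcard sFA cardA /=.
  have : (#|F| %| p ^ 2)%N by rewrite -cardA cardSg.
  case/(dvdn_pfactor _ _ pp) => m; rewrite leq_eqVlt; case/orP => [/eqP -> -> //|].
  rewrite ltnS leq_eqVlt ltnS leqn0 => /orP[] /eqP -> Fm; move: oF; rewrite Fm.
    by rewrite expn1 ltnNge pn.
  by rewrite expn0 ltnS leqn0 => /eqP n0; move: pn; rewrite n0 leqn0 => /eqP p0; move: p1; rewrite p0.
apply/eqP; rewrite eqEsubset; apply/andP; split; apply/subsetP => g /setIP[Gg Cg]; rewrite inE Gg /=.
  rewrite !inE Gg /=; apply/subsetP => x Ax; rewrite inE; apply/eqP.
  have : x \in F by rewrite FA.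
  rewrite /F gacentE ?subsetIl // inE => /andP[_ /afixP]; apply; exact/setIP.
by rewrite !inE Gg sub1set inE /= (astab_act Cg Aa).
Qed.
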